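(* Let $k$ be a field with $\mathrm{char}(k)\ne2$ and let $n\ge4$. There exists an $n\times n$ quantum parameter matrix $\mathfrak{q}$ such that $\mathrm{Aut}_{\mathrm{gr}}(S_{\mathfrak{q}}(k^n))\cong(k^\times)^n\rtimes D_{2n}$.
   Context: An $n\times n$ quantum parameter matrix is a matrix $\mathfrak{q}=(q_{ij})$ over $k$ with $q_{ii}=1$ and $q_{ij}q_{ji}=1$ for all $i,j$. $S_{\mathfrak{q}}(k^n)$ is the $k$-algebra generated by the standard basis $v_1,\dots,v_n$ of $k^n$ with relations $v_jv_i=q_{ij}v_iv_j$, graded by $\deg v_i=1$; $\mathrm{Aut}_{\mathrm{gr}}$ denotes its group of degree-preserving algebra automorphisms, viewed as a subgroup of $\mathrm{GL}(n,k)$. $D_{2n}$ is the dihedral group of order $2n$, viewed as the subgroup of $\mathfrak{S}_n$ generated by $(1\,2\,\cdots\,n)$ and $i\mapsto 1-i \bmod n$; in $(k^\times)^n\rtimes D_{2n}$, $(k^\times)^n$ is the group of invertible diagonal matrices and $D_{2n}$ acts by permuting coordinates (the product is realized as a group of monomial matrices). *)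

(* Defs.v *)
From HB Require Import structures.
From mathcomp Require Import all_boot all_order all_algebra all_fingroup.
From mathcomp Require Import mpoly.
Set Implicit Arguments. Unset Strict Implicit. Unset Printing Implicit Defensive.
Import GRing.Theory.
Local Open Scope ring_scope.

Definition quantum_param (k : fieldType) (n : nat) (q : 'M[k]_n) : Prop :=
  (forall i, q i i = 1) /\ (forall i j, q i j * q j i = 1).

(* Twisting scalar:  v^a * v^b = qtw a b * v^(a+b), where
   v^a = v_1^(a_1) ... v_n^(a_n) (ordered monomials, PBW basis of S_q);
   from v_i v_j = q_ji v_j v_i, each pair (v_i in a, v_j in b) with j < i
   contributes q_ji. *)
Definition qtw (k : fieldType) (n : nat) (q : 'M[k]_n)
    (a b : 'X_{1..n}) : k :=
  \prod_(i < n) \prod_(j < n | (j < i)%N) q j i ^+ (a i * b j).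

(* Multiplication of S_q(k^n), realized on the k-vector space with basis the
   ordered monomials (represented by {mpoly k[n]}): generator v_i = 'X_i. *)
Definition qmul (k : fieldType) (n : nat) (q : 'M[k]_n)
    (p r : {mpoly k[n]}) : {mpoly k[n]} :=
  \sum_(a <- msupp p) \sum_(b <- msupp r)
     (p@_a * r@_b * qtw q a b) *: 'X_[a + b].

(* g in GL(n,k) is a graded automorphism of S_q(k^n): there is a bijective
   k-linear unital multiplicative map f of S_q(k^n) with
   f(v_i) = sum_j g_ji v_j (column i of g is the image of v_i). *)
Definition qgr_aut (k : fieldType) (n : nat) (q : 'M[k]_n) (g : 'M[k]_n) : Prop :=
  g \in unitmx /\
  exists f : {mpoly k[n]} -> {mpoly k[n]},
    [/\ forall (c : k) p r, f (c *: p + r) = c *: f p + f r,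
        bijective f,
        f 1 = 1,
        forall p r, f (qmul q p r) = qmul q (f p) (f r) &
        forall i : 'I_n, f 'X_i = \sum_(j < n) g j i *: 'X_j].

(* Dihedral group D_{2n} <= S_n generated by the rotation (1 2 ... n) and the
   reflection i |-> 1 - i mod n.  With 0-based labels j = i - 1 these are
   j |-> j + 1 mod n (ordS) and j |-> n - 1 - j (rev_ord). *)
Definition dih_rot (n : nat) : 'S_n := perm (@ordS_inj n).
Definition dih_refl (n : nat) : 'S_n := perm (@rev_ord_inj n).
Definition D2n (n : nat) : {set 'S_n} := <<[set dih_rot n; dih_refl n]>>%g.

(* (k^x)^n ⋊ D_{2n} realized as monomial matrices: an invertible diagonal
   matrix times the permutation matrix of an element of D_{2n}. *)
Definition monomial_D2n (k : fieldType) (n : nat) (g : 'M[k]_n) : Prop :=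
  exists (d : 'rV[k]_n) (s : 'S_n),
    [/\ forall i, d 0 i != 0, s \in D2n n & g = diag_mx d *m perm_mx s].

Definition mx_group_iso (k : fieldType) (n : nat)
    (A B : 'M[k]_n -> Prop) : Prop :=
  exists (phi psi : 'M[k]_n -> 'M[k]_n),
    [/\ forall g, A g -> B (phi g),
        forall h, B h -> A (psi h),
        forall g, A g -> psi (phi g) = g,
        forall h, B h -> phi (psi h) = h &
        forall g h, A g -> A h -> phi (g *m h) = phi g *m phi h].

(* Main.v *)
Require Import Defs.
From mathcomp Require Import all_boot all_order all_algebra all_fingroup.
From mathcomp Require Import mpoly ssrcomplements zify ring.
Set Implicit Arguments. Unset Strict Implicit. Unset Printing Implicit Defensive.
Import GRing.Theory.
Local Open Scope ring_scope.

Section Gen.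
Variables (k : fieldType) (n : nat).
Implicit Types (p r : {mpoly k[n]}).

Definition islin (L : {mpoly k[n]} -> {mpoly k[n]}) :=
  forall (c : k) p r, L (c *: p + r) = c *: L p + L r.

Lemma islin0 L : islin L -> L 0 = 0.
Proof.
move=> H; have := H 1 0 0; rewrite !scale1r addr0.
by move/(congr1 (fun x => x - L 0)); rewrite addrK subrr => <-.
Qed.

Lemma islinZ L c p : islin L -> L (c *: p) = c *: L p.
Proof. by move=> H; rewrite -[c *: p]addr0 H islin0 ?addr0. Qed.

Lemma islin_sum L (I : Type) (s : seq I) (c : I -> k) (v : I -> {mpoly k[n]}) :
  islin L -> L (\sum_(i <- s) c i *: v i) = \sum_(i <- s) c i *: L (v i).
Proof.
move=> H; elim: s => [|x s IH]; first by rewrite !big_nil islin0.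
by rewrite !big_cons H IH.
Qed.

Lemma islin_expand L p : islin L ->
  L p = \sum_(m <- msupp p) p@_m *: L 'X_[m].
Proof. by move=> H; rewrite {1}(mpolyE p) islin_sum. Qed.

Lemma islin_comp L1 L2 : islin L1 -> islin L2 -> islin (fun p => L1 (L2 p)).
Proof. by move=> H1 H2 c p r; rewrite H2 H1. Qed.

Lemma sumw (V : nmodType) p (F : 'X_{1..n} -> V) kk :
  (msize p <= kk)%N -> (forall m, p@_m = 0 -> F m = 0) ->
  \sum_(m <- msupp p) F m = \sum_(m : 'X_{1..n < kk}) F m.
Proof.
move=> lt_pk HF; pose I : subFinType _ := 'X_{1..n < kk}.
rewrite (big_mksub I) //=; first last.
  by move=> x /msize_mdeg_lt /leq_trans; apply.
  by rewrite msupp_uniq.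
by rewrite big_rmcond //= => i /memN_msupp_eq0 /HF.
Qed.

End Gen.

Section Q.
Variables (k : fieldType) (n : nat) (q : 'M[k]_n).
Implicit Types (p r : {mpoly k[n]}).

Lemma qmulwE kk p r : (msize p <= kk)%N -> (msize r <= kk)%N ->
  qmul q p r = \sum_(a : 'X_{1..n < kk}) \sum_(b : 'X_{1..n < kk})
     (p@_a * r@_b * qtw q a b) *: 'X_[a + b].
Proof.
move=> hp hr; rewrite /qmul (sumw hp); last first.
  by move=> m pm; rewrite big1 // => b _; rewrite pm !mul0r scale0r.
apply: eq_bigr => a _; rewrite (sumw hr) //.
by move=> m rm; rewrite rm mulr0 mul0r scale0r.
Qed.

Lemma qmul_linl r : islin (fun p => qmul q p r).
Proof.
move=> c p p'; set kk := (msize p + msize p' + msize r + msize (c *: p + p'))%N.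
have h1 : (msize p <= kk)%N by rewrite /kk; lia.
have h2 : (msize p' <= kk)%N by rewrite /kk; lia.
have h3 : (msize r <= kk)%N by rewrite /kk; lia.
have h4 : (msize (c *: p + p') <= kk)%N by rewrite /kk; lia.
rewrite !(qmulwE h1 h3) !(qmulwE h2 h3) !(qmulwE h4 h3).
rewrite scaler_sumr -big_split; apply: eq_bigr => a _.
rewrite scaler_sumr -big_split; apply: eq_bigr => b _.
by rewrite /= scalerA -scalerDl mcoeffD mcoeffZ !mulrDl !mulrA.
Qed.

Lemma qmul_linr p : islin (fun r => qmul q p r).
Proof.
move=> c r r'; set kk := (msize r + msize r' + msize p + msize (c *: r + r'))%N.
have h1 : (msize r <= kk)%N by rewrite /kk; lia.
have h2 : (msize r' <= kk)%N by rewrite /kk; lia.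
have h3 : (msize p <= kk)%N by rewrite /kk; lia.
have h4 : (msize (c *: r + r') <= kk)%N by rewrite /kk; lia.
rewrite !(qmulwE h3 h1) !(qmulwE h3 h2) !(qmulwE h3 h4).
rewrite scaler_sumr -big_split; apply: eq_bigr => a _.
rewrite scaler_sumr -big_split; apply: eq_bigr => b _.
rewrite /= scalerA -scalerDl mcoeffD mcoeffZ; congr (_ *: _).
by rewrite mulrDr mulrDl !mulrA [p@_a * c]mulrC.
Qed.

Lemma qmulXX a b : qmul q 'X_[a] 'X_[b] = qtw q a b *: 'X_[a + b].
Proof. by rewrite /qmul !msuppX !big_seq1 !mcoeffX !eqxx !mul1r. Qed.

End Q.

Section T.
Variables (k : fieldType) (n : nat) (q : 'M[k]_n).
Implicit Types (p r : {mpoly k[n]}).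

Definition tmap (h : 'X_{1..n} -> 'X_{1..n}) (c : 'X_{1..n} -> k) p : {mpoly k[n]} :=
  \sum_(m <- msupp p) (c m * p@_m) *: 'X_[h m].

Lemma tmap_lin h c : islin (tmap h c).
Proof.
move=> a p p'; set kk := (msize p + msize p' + msize (a *: p + p'))%N.
have h1 : (msize p <= kk)%N by rewrite /kk; lia.
have h2 : (msize p' <= kk)%N by rewrite /kk; lia.
have h4 : (msize (a *: p + p') <= kk)%N by rewrite /kk; lia.
rewrite /tmap (sumw h1) ?(sumw h2) ?(sumw h4); first last.
- by move=> m ->; rewrite mulr0 scale0r.
- by move=> m ->; rewrite mulr0 scale0r.
- by move=> m ->; rewrite mulr0 scale0r.
rewrite scaler_sumr -big_split; apply: eq_bigr => m _.
by rewrite /= scalerA -scalerDl mcoeffD mcoeffZ mulrDr mulrCA.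
Qed.

Lemma tmapX h c a : tmap h c 'X_[a] = c a *: 'X_[h a].
Proof. by rewrite /tmap msuppX big_seq1 mcoeffX eqxx mulr1. Qed.

Variables (h hinv : 'X_{1..n} -> 'X_{1..n}) (c : 'X_{1..n} -> k).
Hypotheses (hK : cancel h hinv) (hinvK : cancel hinv h)
  (hD : forall a b, h (a + b)%MM = (h a + h b)%MM) (h0 : h 0%MM = 0%MM)
  (cnz : forall m, c m != 0) (c0 : c 0%MM = 1)
  (hc : forall a b, c (a + b)%MM * qtw q a b = c a * c b * qtw q (h a) (h b)).

Lemma tmap_bij : bijective (tmap h c).
Proof.
pose c' m := (c (hinv m))^-1.
exists (tmap hinv c') => p.
  rewrite (@islin_expand _ _ (fun p => tmap hinv c' (tmap h c p))); last first.
    exact/islin_comp/tmap_lin/tmap_lin.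
  rewrite [RHS]mpolyE; apply: eq_bigr => m _.
  by rewrite tmapX (islinZ _ _ (tmap_lin _ _)) tmapX scalerA /c' hK scalerA -mulrA mulfV ?mulr1.
rewrite (@islin_expand _ _ (fun p => tmap h c (tmap hinv c' p))); last first.
  exact/islin_comp/tmap_lin/tmap_lin.
rewrite [RHS]mpolyE; apply: eq_bigr => m _.
by rewrite tmapX (islinZ _ _ (tmap_lin _ _)) tmapX scalerA /c' hinvK scalerA -mulrA mulVf ?mulr1.
Qed.

Lemma tmap1 : tmap h c 1 = 1.
Proof. by rewrite -mpolyX0 tmapX h0 c0 scale1r. Qed.

Lemma tmapM p r : tmap h c (qmul q p r) = qmul q (tmap h c p) (tmap h c r).
Proof.
have L1 := tmap_lin h c.
rewrite (@islin_expand _ _ (fun p => tmap h c (qmul q p r))); last first.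
  exact/islin_comp/qmul_linl.
rewrite (@islin_expand _ _ (fun p => qmul q (tmap h c p) (tmap h c r))); last first.
  by move=> a x y; rewrite L1 qmul_linl.
apply: eq_bigr => a _; congr (_ *: _).
rewrite (@islin_expand _ _ (fun r => tmap h c (qmul q 'X_[a] r))); last first.
  exact/islin_comp/qmul_linr.
rewrite (@islin_expand _ _ (fun r => qmul q (tmap h c 'X_[a]) (tmap h c r))); last first.
  by move=> b x y; rewrite L1 qmul_linr.
apply: eq_bigr => b _; congr (_ *: _).
rewrite qmulXX (islinZ _ _ L1) !tmapX.
rewrite (islinZ _ _ (qmul_linl _ _)) (islinZ _ _ (qmul_linr _ _)) qmulXX.
by rewrite !scalerA hD mulrC hc.
Qed.

End T.

Section Adj.
Variable n : nat.
Hypothesis n4 : (4 <= n)%N.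

Definition adj (i j : 'I_n) : bool := (j == ordS i) || (i == ordS j).

Lemma valS (i : 'I_n) : val (ordS i) = if (i.+1 < n)%N then i.+1 else 0%N.
Proof.
rewrite /=; case: ltnP => h; first by rewrite modn_small.
have -> : i.+1 = n by apply/eqP; rewrite eqn_leq h ltn_ord.
by rewrite modnn.
Qed.

Lemma valrev (i : 'I_n) : val (rev_ord i) = (n - i.+1)%N.
Proof. by []. Qed.

Lemma valiterS m (i : 'I_n) : val (iter m (@ordS n) i) = ((i + m) %% n)%N.
Proof.
elim: m => [|m IH] /=; first by rewrite addn0 modn_small.
by rewrite IH -addn1 modnDml -addnA addn1.
Qed.

Lemma iterS_neq (m : nat) (i : 'I_n) : (0 < m < 4)%N -> iter m (@ordS n) i != i.
Proof.
move=> /andP[m0 m4]; rewrite -val_eqE /= valiterS.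
rewrite -[X in _ != X](@modn_small i n) //.
rewrite -{2}[val i]addn0 eqn_modDl mod0n modn_small; first by rewrite -lt0n.
by apply: leq_trans n4.
Qed.

Lemma S1 (i : 'I_n) : ordS i != i. Proof. exact: (@iterS_neq 1). Qed.
Lemma S2 (i : 'I_n) : ordS (ordS i) != i. Proof. exact: (@iterS_neq 2). Qed.
Lemma S3 (i : 'I_n) : ordS (ordS (ordS i)) != i. Proof. exact: (@iterS_neq 3). Qed.

Lemma eqS_pred (a b : 'I_n) : (a == ordS b) = (ord_pred a == b).
Proof. by rewrite -[RHS](inj_eq (@ordS_inj n)) ord_predK. Qed.

Lemma adjC i j : adj i j = adj j i. Proof. by rewrite /adj orbC. Qed.

Lemma adj_irr i : ~~ adj i i.
Proof. by rewrite /adj orbb eq_sym S1. Qed.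

Lemma adjS i : adj i (ordS i). Proof. by rewrite /adj eqxx. Qed.

Lemma adjE a b : adj a b = (b == ordS a) || (b == ord_pred a).
Proof. by rewrite /adj [a == ordS b]eqS_pred [ord_pred a == b]eq_sym. Qed.

Lemma adj_neq i j : adj i j -> i != j.
Proof. by apply: contraTneq => ->; rewrite adj_irr. Qed.

Lemma nadjSS i : ~~ adj i (ordS (ordS i)).
Proof.
rewrite /adj negb_or (inj_eq (@ordS_inj n)) S1 /=.
by rewrite eq_sym S3.
Qed.

Lemma nadjPS i : ~~ adj (ord_pred i) (ordS i).
Proof.
rewrite /adj negb_or ord_predK S1 /= -eqS_pred eq_sym.
exact: S3.
Qed.

End Adj.

Lemma neqC (T : eqType) (x y : T) : x != y -> y != x.
Proof. by rewrite eq_sym. Qed.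

Section Core.
Variables (k : fieldType) (n : nat).
Hypothesis n4 : (4 <= n)%N.
Variable g : 'M[k]_n.
Hypothesis gU : g \in unitmx.
Hypothesis HA : forall i j a, i != j -> ~~ adj i j -> g a i * g a j = 0.
Hypothesis HB : forall i j a b, adj i j -> a != b -> ~~ adj a b ->
  g a j * g b i = g a i * g b j.

Local Notation S := (@ordS n).
Local Notation P := (@ord_pred n).

Lemma F3 (i c : 'I_n) : c != i -> c != S i -> ~~ adj i c || ~~ adj (S i) c.
Proof.
move=> ci cSi; rewrite !(@adjE n) ordSK (negbTE ci) (negbTE cSi) /=.
case: (eqVneq c (P i)) => [->|] //=.
by rewrite -eqS_pred eq_sym orbF (S3 n4).
Qed.

Lemma rowgen a i : g a i != 0 -> g a (S i) != 0 ->
  forall c, c != i -> c != S i -> g a c = 0.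
Proof.
move=> h1 h2 c ci cSi; case/orP: (F3 ci cSi) => nadj.
  have := HA a (neqC ci) nadj.
  by move/eqP; rewrite mulf_eq0 (negbTE h1) /= => /eqP.
have := HA a (neqC cSi) nadj.
by move/eqP; rewrite mulf_eq0 (negbTE h2) /= => /eqP.
Qed.

Lemma rows_indep a b (l : k) : a != b -> (forall c, g b c = l * g a c) -> False.
Proof.
move=> ab E.
have : (delta_mx 0 b : 'rV[k]_n) *m g = (l *: (delta_mx 0 a : 'rV[k]_n)) *m g.
  rewrite -scalemxAl -!rowE; apply/rowP => c; rewrite !mxE; exact: E.
move/(can_inj (mulmxK gU))/matrixP/(_ 0 b); rewrite !mxE !eqxx /=.
by rewrite eq_sym (negbTE ab) mulr0 => /eqP; rewrite oner_eq0.
Qed.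

Lemma det_perm : exists s : 'S_n, forall r, g r (s r) != 0.
Proof.
case: (pickP (fun s : 'S_n => \prod_i g i (s i) != 0)) => [s hs|h].
  by exists s => r; move/prodf_neq0: hs; apply.
move: gU; rewrite unitmxE unitfE /determinant big1 ?eqxx // => s _.
by move/negbFE/eqP: (h s) => ->; rewrite mulr0.
Qed.

Lemma no2 a j : g a (S j) != 0 -> g a (S (S j)) != 0 -> False.
Proof.
move=> h1 h2.
have rowa := rowgen h1 h2.
have SS1 := @S1 n n4; have SS2 := @S2 n n4; have SS3 := @S3 n n4.
have key : forall b, b != a -> ~~ adj a b ->
    forall c, c \in [:: j; S j; S (S j); S (S (S j))] -> g b c = 0.
  move=> b ba nab; have ab : a != b by rewrite eq_sym.
  have h3 : g b (S (S (S j))) = 0.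
    have := HB (adjS (S (S j))) ab nab.
    rewrite (rowa (S (S (S j)))); first last.
    - by rewrite (inj_eq (@ordS_inj n)) (inj_eq (@ordS_inj n)) SS1.
    - by rewrite (inj_eq (@ordS_inj n)) SS2.
    by rewrite mul0r => /esym/eqP; rewrite mulf_eq0 (negbTE h2) => /eqP.
  have h0 : g b j = 0.
    have := HB (adjS j) ab nab.
    rewrite (rowa j); first last.
    - by rewrite eq_sym SS2.
    - by rewrite eq_sym SS1.
    by rewrite mul0r => /eqP; rewrite mulf_eq0 (negbTE h1) => /eqP.
  have E := HB (adjS (S j)) ab nab.
  have [h12 h22] : g b (S j) = 0 /\ g b (S (S j)) = 0.
    case: (eqVneq (g b (S j)) 0) => hb1.
      split => //; move: E; rewrite hb1 mulr0 => /esym/eqP.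
      by rewrite mulf_eq0 (negbTE h1) => /eqP.
    have hb2 : g b (S (S j)) != 0.
      apply/eqP => h; move: E; rewrite h mulr0 => /eqP.
      by rewrite mulf_eq0 (negbTE h2) (negbTE hb1).
    exfalso; have rowb := rowgen hb1 hb2.
    apply: (@rows_indep a b (g b (S j) / g a (S j)) ab) => c.
    case: (eqVneq c (S j)) => [->|c1]; first by rewrite mulfVK.
    case: (eqVneq c (S (S j))) => [->|c2].
      apply: (mulfI h1); rewrite -E; field; exact: h1.
    by rewrite (rowa c) // (rowb c) // mulr0.
  move=> c; rewrite !inE => /or4P[] /eqP -> //.
have [s hs] := det_perm.
pose l := [:: j; S j; S (S j); S (S (S j))].
have ul : uniq l.
  rewrite /l /= !inE !negb_or !(inj_eq (@ordS_inj n)) !(eq_sym j) SS1 SS2 SS3.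
  by [].
have um : uniq (map (s^-1)%g l) by rewrite map_inj_uniq //; exact: perm_inj.
have sub : {subset map (s^-1)%g l <= [:: P a; a; S a]}.
  move=> r /mapP [c cl ->]; set r' := (s^-1)%g c.
  have nz : g r' c != 0 by have := hs r'; rewrite /r' permKV.
  case: (eqVneq r' a) => [->|ra]; first by rewrite !inE eqxx orbT.
  case nadj: (adj a r'); last by rewrite (key r' ra (negbT nadj) c cl) eqxx in nz.
  by move: nadj; rewrite adjE !inE => /orP[] ->; rewrite ?orbT.
by have := uniq_leq_size um sub; rewrite size_map.
Qed.

Lemma core : exists s : 'S_n,
  (forall r, g r (s r) != 0) /\ (forall r c, c != s r -> g r c = 0).
Proof.
have [s hs] := det_perm; exists s; split => // r c cs.
apply/eqP; apply: contraT => hc.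
have : adj (s r) c.
  apply: contraT => nadj.
  by have := HA r (neqC cs) nadj; move/eqP; rewrite mulf_eq0 (negbTE (hs r)) (negbTE hc).
rewrite adjE => /orP[] /eqP ce.
  by exfalso; apply: (@no2 r (ord_pred (s r))); rewrite ord_predK ?hs // -ce.
by exfalso; apply: (@no2 r (ord_pred c)); rewrite ord_predK // ce ord_predK ?hs.
Qed.

End Core.

Section Dih.
Variable n : nat.
Hypothesis n4 : (4 <= n)%N.
Local Notation S := (@ordS n).

Lemma rotE x : dih_rot n x = S x. Proof. by rewrite /dih_rot permE. Qed.
Lemma reflE x : dih_refl n x = rev_ord x. Proof. by rewrite /dih_refl permE. Qed.

Lemma rev_adj_aux (x y : 'I_n) : (rev_ord y == S (rev_ord x)) = (x == S y).
Proof.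
rewrite -!val_eqE !valS !valrev /=.
have := ltn_ord x; have := ltn_ord y.
by case: ifP => h1; case: ifP => h2; move=> hy hx; apply/idP/idP => /eqP e; apply/eqP; lia.
Qed.

Lemma rot_adj x y : adj (dih_rot n x) (dih_rot n y) = adj x y.
Proof. by rewrite !rotE /adj !(inj_eq (@ordS_inj n)). Qed.

Lemma refl_adj x y : adj (dih_refl n x) (dih_refl n y) = adj x y.
Proof. by rewrite !reflE /adj !rev_adj_aux orbC. Qed.

Definition Hadj : {set 'S_n} :=
  [set t : 'S_n | [forall x, forall y, adj (t x) (t y) == adj x y]].

Lemma Hadj_group : group_set Hadj.
Proof.
apply/group_setP; split.
  by rewrite inE; apply/forallP => x; apply/forallP => y; rewrite !perm1.
move=> s t; rewrite !inE => /forallP hs /forallP ht.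
apply/forallP => x; apply/forallP => y; rewrite !permM.
by move/forallP: (ht (s x)) => /(_ (s y)) /eqP ->; move/forallP: (hs x) => /(_ y).
Qed.

Canonical Hadj_grp := Group Hadj_group.

Lemma D2n_adj (t : 'S_n) x y : t \in D2n n -> adj (t x) (t y) = adj x y.
Proof.
move=> tD.
have : t \in Hadj.
  have sub : D2n n \subset Hadj_grp.
    rewrite /D2n gen_subG; apply/subsetP => u; rewrite !inE => /orP[] /eqP ->;
    apply/forallP => a; apply/forallP => b; apply/eqP.
      exact: rot_adj.
    exact: refl_adj.
  exact: (subsetP sub).
by rewrite inE => /forallP /(_ x) /forallP /(_ y) /eqP.
Qed.

Lemma rot_pow m x : (dih_rot n ^+ m)%g x = iter m S x.
Proof.
elim: m => [|m IH]; first by rewrite expg0 perm1.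
by rewrite expgSr permM rotE IH.
Qed.

Lemma reflS w : rev_ord w = S (rev_ord (S w)).
Proof.
apply/val_inj; rewrite valrev valS valrev valS /=.
have hw := ltn_ord w; case: (ltnP w.+1 n) => h1; case: ifP => h2; lia.
Qed.

Let n0 : (0 < n)%N. Proof. by apply: leq_trans n4. Qed.
Let z : 'I_n := Ordinal n0.

Lemma Dcase1 (t : 'S_n) : (forall x y, adj x y -> adj (t x) (t y)) -> t (S z) = S (t z) ->
  t = (dih_rot n ^+ (val (t z)))%g.
Proof.
move=> ht h1.
have key : forall m, t (iter m S z) = iter m S (t z) /\ t (iter m.+1 S z) = iter m.+1 S (t z).
  elim => [|m [IH1 IH2]]; first by split.
  split => //.
  have := ht _ _ (adjS (iter m.+1 S z)); rewrite IH2 adjE.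
  case/orP => /eqP // e.
  have : t (iter m.+2 S z) = t (iter m S z).
    by rewrite e IH1 /= ordSK.
  by move/(@perm_inj _ t) => /eqP; rewrite /= (negbTE (S2 n4 _)).
apply/permP => x; rewrite rot_pow.
have ex : x = iter x S z by apply/val_inj; rewrite valiterS /= add0n modn_small.
rewrite [in LHS]ex (key x).1; apply/val_inj; rewrite !valiterS.
by rewrite addnC.
Qed.

Lemma Dchar (t : 'S_n) : (forall x y, adj x y -> adj (t x) (t y)) -> t \in D2n n.
Proof.
move=> ht.
have rotD : dih_rot n \in D2n n by apply: mem_gen; rewrite !inE eqxx.
have reflD : dih_refl n \in D2n n by apply: mem_gen; rewrite !inE eqxx orbT.
have := ht _ _ (adjS z); rewrite /adj => /orP[] /eqP e.
  by rewrite (Dcase1 ht e) groupX.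
pose t' := (t * dih_refl n)%g.
have ht' : forall x y, adj x y -> adj (t' x) (t' y).
  by move=> x y a; rewrite !permM refl_adj ht.
have e' : t' (S z) = S (t' z).
  by rewrite !permM !reflE e -reflS.
have -> : t = (t' * (dih_refl n)^-1)%g by rewrite mulgK.
by rewrite groupM ?groupV // (Dcase1 ht' e') groupX.
Qed.

End Dih.

Section QQ.
Variables (k : fieldType) (n : nat).

Lemma qtwUU (q : 'M[k]_n) (x y : 'I_n) :
  qtw q U_(x)%MM U_(y)%MM = if (y < x)%N then q y x else 1.
Proof.
rewrite /qtw (bigD1 x) //= [X in _ * X]big1 ?mulr1; last first.
  move=> i ix; apply: big1 => j _; rewrite mnm1E (negbTE (neqC ix)) mul0n.
  by rewrite expr0.
case: ifP => yx.
  rewrite (bigD1 y) //= big1 ?mulr1; last first.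
    by move=> j /andP[_ jy]; rewrite !mnm1E eqxx (negbTE (neqC jy)) muln0 expr0.
  by rewrite !mnm1E !eqxx muln1 expr1.
apply: big1 => j jx; rewrite !mnm1E.
case: (eqVneq y j) => [yj|]; last by rewrite muln0 expr0.
by rewrite -yj yx in jx.
Qed.

Lemma UU_eq (l l' a b : 'I_n) :
  (U_(l) + U_(l') == U_(a) + U_(b))%MM = ((l == a) && (l' == b)) || ((l == b) && (l' == a)).
Proof.
apply/idP/idP; last first.
  by case/orP => /andP[/eqP -> /eqP ->] //; rewrite addmC.
move/eqP => E.
have := congr1 (fun m : 'X_{1..n} => m l) E; rewrite /= !mnmDE !mnm1E eqxx.
case: (eqVneq a l) => [al|al].
  move: E; rewrite al => /addmI /eqP; rewrite eq_mnm1 => ->.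
  by [].
case: (eqVneq b l) => [bl|bl]; last by [].
move=> _; move: E; rewrite bl [X in _ = X]addmC => /addmI /eqP; rewrite eq_mnm1 => ->.
by rewrite orbT.
Qed.

Lemma sum2_ind (F : 'I_n -> 'I_n -> k) a b :
  \sum_l \sum_l' F l l' * ((l == a) && (l' == b))%:R = F a b.
Proof.
rewrite (bigD1 a) //= [X in _ + X]big1 ?addr0; last first.
  by move=> l la; apply: big1 => l' _; rewrite (negbTE la) mulr0.
rewrite (bigD1 b) //= [X in _ + X]big1 ?addr0; last first.
  by move=> l la; rewrite eqxx (negbTE la) mulr0.
by rewrite !eqxx mulr1.
Qed.

Lemma mcoeffS (I : Type) (r : seq I) (F : I -> {mpoly k[n]}) m :
  (\sum_(i <- r) F i)@_m = \sum_(i <- r) (F i)@_m.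
Proof. exact: raddf_sum. Qed.

Lemma coefUU (q : 'M[k]_n) (u w : 'I_n -> k) a b :
  (qmul q (\sum_l u l *: 'X_l) (\sum_l w l *: 'X_l))@_(U_(a) + U_(b))%MM =
  if a == b then u a * w a * qtw q U_(a)%MM U_(a)%MM
  else u a * w b * qtw q U_(a)%MM U_(b)%MM + u b * w a * qtw q U_(b)%MM U_(a)%MM.
Proof.
rewrite (islin_sum _ _ _ (qmul_linl _ _)).
have E : forall l, qmul q 'X_l (\sum_l0 w l0 *: 'X_l0) =
    \sum_l' w l' *: (qtw q U_(l)%MM U_(l')%MM *: 'X_[U_(l) + U_(l')]).
  by move=> l; rewrite (islin_sum _ _ _ (qmul_linr _ _)); apply: eq_bigr => l' _; rewrite qmulXX.
under eq_bigr => l _ do rewrite E.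
rewrite mcoeffS.
under eq_bigr => l _ do rewrite mcoeffZ mcoeffS big_distrr /=.
under eq_bigr => l _ do under eq_bigr => l' _ do
  rewrite mcoeffZ mcoeffZ mcoeffX UU_eq mulrA mulrA.
case: eqVneq => [<-|ab].
  under eq_bigr => l _ do under eq_bigr => l' _ do rewrite orbb.
  exact: (sum2_ind (fun l l' => u l * w l' * qtw q U_(l)%MM U_(l')%MM)).
have split : forall l l', (((l == a) && (l' == b)) || ((l == b) && (l' == a)))%:R =
    ((l == a) && (l' == b))%:R + ((l == b) && (l' == a))%:R :> k.
  move=> l l'; case: (eqVneq l a) => [->|] /=; case: (eqVneq l' b) => [->|] //=;
    rewrite ?(negbTE ab) ?andbF ?addr0 ?add0r //.
under eq_bigr => l _ do under eq_bigr => l' _ do rewrite split mulrDr.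
under eq_bigr => l _ do rewrite big_split /=.
rewrite big_split /= (sum2_ind (fun l l' => u l * w l' * qtw q U_(l)%MM U_(l')%MM)).
by rewrite (sum2_ind (fun l l' => u l * w l' * qtw q U_(l)%MM U_(l')%MM)).
Qed.

End QQ.

Section Main.
Variables (k : fieldType) (n : nat).
Hypothesis n4 : (4 <= n)%N.
Hypothesis two : (2%:R : k) != 0.

Definition qq (i j : 'I_n) : k := if (i == j) || adj i j then 1 else -1.
Definition qm : 'M[k]_n := \matrix_(i, j) qq i j.
Definition Qf (x y : 'I_n) : k := if (y < x)%N then qq y x else 1.

Lemma m1_neq1 : (-1 : k) != 1.
Proof.
apply/eqP => h; move/eqP: two; apply.
by rewrite -[2%:R]/(1 + 1 : k) -{1}h addNr.
Qed.

Lemma qqC i j : qq i j = qq j i. Proof. by rewrite /qq eq_sym adjC. Qed.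
Lemma qq2 i j : qq i j * qq i j = 1.
Proof. by rewrite /qq; case: ifP; rewrite ?mulr1 ?mulrNN ?mulr1. Qed.
Lemma Qf2 x y : Qf x y * Qf x y = 1.
Proof. by rewrite /Qf; case: ifP; rewrite ?qq2 ?mulr1. Qed.

Lemma QfC x y : x != y -> Qf x y * Qf y x = qq x y.
Proof.
move=> xy; rewrite /Qf; case: (ltngtP x y) => h.
- by rewrite mul1r.
- by rewrite mulr1 qqC.
- by move/val_inj: h => e; rewrite e eqxx in xy.
Qed.

Lemma Qf_adj x y : adj x y -> Qf x y = 1.
Proof. by move=> a; rewrite /Qf /qq adjC a orbT; case: ifP. Qed.

Lemma Qf_nadj x y : x != y -> ~~ adj x y -> Qf x y != Qf y x.
Proof.
move=> xy na; apply/eqP => e.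
have := QfC xy; rewrite -e Qf2 /qq (negbTE xy) (negbTE na) /= => /eqP.
by rewrite eq_sym (negbTE m1_neq1).
Qed.

Lemma qtwQ x y : qtw qm U_(x)%MM U_(y)%MM = Qf x y.
Proof. by rewrite qtwUU /Qf mxE. Qed.

Lemma qparam : quantum_param qm.
Proof.
split => [i|i j]; first by rewrite mxE /qq eqxx.
by rewrite !mxE qqC qq2.
Qed.

Lemma AB g : qgr_aut qm g -> monomial_D2n g.
Proof.
case=> gU [f [lin bij f1 fM fX]].
have rel : forall i j : 'I_n,
    Qf i j *: qmul qm (f 'X_j) (f 'X_i) = Qf j i *: qmul qm (f 'X_i) (f 'X_j).
  move=> i j; rewrite -!fM -!(islinZ _ _ lin) !qmulXX !qtwQ !scalerA.
  by rewrite mulrC addmC.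
have coef : forall i j a b,
    Qf i j * (qmul qm (f 'X_j) (f 'X_i))@_(U_(a) + U_(b))%MM =
    Qf j i * (qmul qm (f 'X_i) (f 'X_j))@_(U_(a) + U_(b))%MM.
  by move=> i j a b; rewrite -!mcoeffZ rel.
have HA : forall i j a, i != j -> ~~ adj i j -> g a i * g a j = 0.
  move=> i j a ij na; have := coef i j a a.
  rewrite !fX !coefUU eqxx !qtwQ.
  move=> E; have : (Qf i j - Qf j i) * (g a i * g a j * Qf a a) = 0.
    transitivity (Qf i j * (g a j * g a i * Qf a a) - Qf j i * (g a i * g a j * Qf a a)).
      by ring.
    by rewrite E subrr.
  move/eqP; rewrite mulf_eq0 subr_eq0 (negbTE (Qf_nadj ij na)) /=.
  rewrite mulf_eq0 => /orP[/eqP //|]; rewrite /Qf ltnn => /eqP h.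
  by move: (oner_neq0 k); rewrite h eqxx.
have HB : forall i j a b, adj i j -> a != b -> ~~ adj a b ->
    g a j * g b i = g a i * g b j.
  move=> i j a b aij ab nab; have := coef i j a b.
  have aji : adj j i by rewrite adjC.
  rewrite !fX !coefUU (negbTE ab) !qtwQ (Qf_adj aij) (Qf_adj aji).
  move=> E; have : (Qf a b - Qf b a) * (g a j * g b i - g a i * g b j) = 0.
    transitivity (1 * (g a j * g b i * Qf a b + g b j * g a i * Qf b a) -
                  1 * (g a i * g b j * Qf a b + g b i * g a j * Qf b a)).
      by ring.
    by rewrite E subrr.
  move/eqP; rewrite mulf_eq0 subr_eq0 (negbTE (Qf_nadj ab nab)) /= subr_eq0.
  by move/eqP.
have [s [hs hz]] := core n4 gU HA HB.
exists (\row_r g r (s r)), s; split.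
- by move=> i; rewrite mxE.
- rewrite -[s]invgK groupV; apply: Dchar => // x y axy.
  apply: contraT => nadj.
  have ab : (s^-1)%g x != (s^-1)%g y.
    by rewrite (inj_eq (@perm_inj _ _)); exact: adj_neq axy.
  have := HB x y _ _ axy ab nadj.
  rewrite (hz _ y); last first.
    by rewrite permKV eq_sym; exact: adj_neq axy.
  rewrite mul0r => /esym/eqP; rewrite mulf_eq0.
  have := hs ((s^-1)%g x); have := hs ((s^-1)%g y); rewrite !permKV.
  by move=> /negbTE -> /negbTE ->.
- apply/matrixP => r c; rewrite mul_diag_mx !mxE.
  case: (eqVneq (s r) c) => [<-|sc]; first by rewrite mulr1.
  by rewrite mulr0 hz // eq_sym.
Qed.

End Main.

Section Eps.
Variables (k : fieldType) (n : nat).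

Definition epsw (w : 'I_n -> 'I_n -> k) (m : 'X_{1..n}) : k :=
  \prod_(x < n) \prod_(y < n | (y < x)%N) w x y ^+ (m x * m y).

Lemma epsD (w : 'I_n -> 'I_n -> k) (ws : forall x y, w x y = w y x)
  (wd : forall x, w x x = 1) (a b : 'X_{1..n}) :
  epsw w (a + b)%MM = epsw w a * epsw w b * \prod_x \prod_y w x y ^+ (a x * b y).
Proof.
have step1 : epsw w (a + b)%MM = epsw w a * epsw w b *
   ((\prod_(x < n) \prod_(y < n | (y < x)%N) w x y ^+ (a x * b y)) *
    (\prod_(x < n) \prod_(y < n | (y < x)%N) w x y ^+ (b x * a y))).
  rewrite /epsw -!big_split; apply: eq_bigr => x _ /=.
  rewrite -!big_split; apply: eq_bigr => y _ /=.
  rewrite !mnmDE -!exprD; congr (_ ^+ _); ring.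
rewrite step1; congr (_ * _).
rewrite (eq_bigr (fun x : 'I_n => \prod_(y < n) (if (y < x)%N then w x y ^+ (a x * b y) else 1)));
  last by move=> x _; rewrite big_mkcond.
rewrite [X in _ * X](eq_bigr (fun x : 'I_n => \prod_(y < n) (if (y < x)%N then w x y ^+ (b x * a y) else 1)));
  last by move=> x _; rewrite big_mkcond.
rewrite [X in _ * X]exchange_big /= -big_split; apply: eq_bigr => x _ /=.
rewrite -big_split; apply: eq_bigr => y _ /=.
case: (ltngtP x y) => h.
- by rewrite mul1r ws mulnC.
- by rewrite mulr1.
- by move/val_inj: h => ->; rewrite wd !expr1n mulr1.
Qed.

End Eps.

Section BA.
Variables (k : fieldType) (n : nat).
Hypothesis n4 : (4 <= n)%N.
Hypothesis two : (2%:R : k) != 0.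
Variables (d : 'rV[k]_n) (s : 'S_n).
Hypothesis hd : forall i, d 0 i != 0.
Hypothesis sD : s \in D2n n.

Local Notation pi := (s^-1)%g.

Definition hm (m : 'X_{1..n}) : 'X_{1..n} := [multinom m (s i) | i < n].
Definition hinvm (m : 'X_{1..n}) : 'X_{1..n} := [multinom m (pi i) | i < n].
Definition wf (x y : 'I_n) : k := Qf k (pi x) (pi y) * Qf k x y.
Definition Dm (m : 'X_{1..n}) : k := \prod_i d 0 i ^+ (hm m i).
Definition cm m := Dm m * epsw wf m.

Lemma piD : pi \in D2n n. Proof. by rewrite groupV. Qed.

Lemma qq_pi x y : qq k (pi x) (pi y) = qq k x y.
Proof. by rewrite /qq (inj_eq (@perm_inj _ _)) (D2n_adj n4 _ _ piD). Qed.

Lemma wf_sym x y : wf x y = wf y x.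
Proof.
case: (eqVneq x y) => [->//|xy].
have pxy : pi x != pi y by rewrite (inj_eq (@perm_inj _ _)).
have E := QfC k pxy; rewrite qq_pi -(QfC k xy) in E.
rewrite /wf.
have hA' := Qf2 k (pi y) (pi x); have hB' := Qf2 k y x; have hB := Qf2 k x y.
set A := Qf k (pi x) (pi y) in E *; set A' := Qf k (pi y) (pi x) in E hA' *.
set B := Qf k x y in E hB *; set B' := Qf k y x in E hB' *.
transitivity (A * B * (A' * A') * (B' * B')); first by rewrite hA' hB' !mulr1.
transitivity ((A * A') * (B * B') * A' * B'); first by ring.
rewrite E; transitivity ((B * B) * (B' * B') * A' * B'); first by ring.
by rewrite hB hB' !mul1r.
Qed.

Lemma wf_diag x : wf x x = 1.
Proof. by rewrite /wf /Qf !ltnn mulr1. Qed.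

Lemma wf_nz x y : wf x y != 0.
Proof.
apply/eqP => h; have : wf x y * wf x y = 1.
  by rewrite /wf mulrACA !Qf2 mulr1.
by rewrite h mulr0 => /eqP; rewrite eq_sym oner_eq0.
Qed.

Lemma hK : cancel hm hinvm.
Proof. by move=> m; apply/mnmP => i; rewrite !mnmE permKV. Qed.
Lemma hinvK : cancel hinvm hm.
Proof. by move=> m; apply/mnmP => i; rewrite !mnmE permK. Qed.
Lemma hD a b : hm (a + b)%MM = (hm a + hm b)%MM.
Proof. by apply/mnmP => i; rewrite !(mnmE, mnmDE). Qed.
Lemma h0 : hm 0%MM = 0%MM.
Proof. by apply/mnmP => i; rewrite !(mnmE, mnm0E). Qed.
Lemma hU i : hm U_(i)%MM = U_(pi i)%MM.
Proof.
apply/mnmP => x; rewrite mnmE !mnm1E.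
by rewrite -[in RHS](inj_eq (@perm_inj _ s)) permKV.
Qed.

Lemma DmD a b : Dm (a + b)%MM = Dm a * Dm b.
Proof. by rewrite /Dm -big_split; apply: eq_bigr => i _; rewrite hD mnmDE exprD. Qed.

Lemma cm_nz m : cm m != 0.
Proof.
rewrite /cm mulf_neq0 //; apply/prodf_neq0 => i _; first by rewrite expf_neq0.
by apply/prodf_neq0 => j _; rewrite expf_neq0 // wf_nz.
Qed.

Lemma cm0 : cm 0%MM = 1.
Proof.
rewrite /cm /Dm /epsw h0 big1 ?mul1r; last by move=> i _; rewrite mnm0E expr0.
by apply: big1 => x _; apply: big1 => y _; rewrite mnm0E mul0n expr0.
Qed.

Lemma cmU i : cm U_(i)%MM = d 0 (pi i).
Proof.
rewrite /cm /Dm /epsw hU [X in _ * X]big1 ?mulr1; last first.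
  move=> x _; apply: big1 => y yx; rewrite !mnm1E.
  case: (eqVneq i x) => [ix|]; last by rewrite mul0n expr0.
  case: (eqVneq i y) => [iy|]; last by rewrite muln0 expr0.
  by rewrite -ix -iy ltnn in yx.
rewrite (bigD1 (pi i)) //= mnm1E eqxx expr1 big1 ?mulr1 // => x xi.
by rewrite mnm1E (negbTE (neqC xi)) expr0.
Qed.

Lemma qtw_prod (a b : 'X_{1..n}) :
  qtw (qm k n) a b = \prod_x \prod_y Qf k x y ^+ (a x * b y).
Proof.
rewrite /qtw; apply: eq_bigr => x _; rewrite big_mkcond; apply: eq_bigr => y _.
by rewrite /Qf mxE; case: ifP; rewrite ?expr1n.
Qed.

Lemma qtw_h (a b : 'X_{1..n}) :
  qtw (qm k n) (hm a) (hm b) = \prod_x \prod_y Qf k (pi x) (pi y) ^+ (a x * b y).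
Proof.
rewrite qtw_prod (reindex_inj (@perm_inj _ pi)); apply: eq_bigr => x _.
rewrite (reindex_inj (@perm_inj _ pi)); apply: eq_bigr => y _.
by rewrite !mnmE !permKV.
Qed.

Lemma hc a b : cm (a + b)%MM * qtw (qm k n) a b = cm a * cm b * qtw (qm k n) (hm a) (hm b).
Proof.
have comb : \prod_x \prod_y Qf k (pi x) (pi y) ^+ (a x * b y) =
  (\prod_x \prod_y wf x y ^+ (a x * b y)) * (\prod_x \prod_y Qf k x y ^+ (a x * b y)).
  rewrite -big_split; apply: eq_bigr => x _; rewrite -big_split; apply: eq_bigr => y _.
  by rewrite /= -exprMn /wf -mulrA Qf2 mulr1.
rewrite /cm DmD (epsD wf_sym wf_diag) qtw_prod qtw_h comb; ring.
Qed.

End BA.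

Lemma BA (k : fieldType) (n : nat) (n4 : (4 <= n)%N) (g : 'M[k]_n) :
  monomial_D2n g -> qgr_aut (qm k n) g.
Proof.
case=> d [s [hd sD ->]]; split.
  rewrite unitmx_mul unitmx_perm andbT unitmxE det_diag unitfE.
  by apply/prodf_neq0 => i _; exact: hd.
exists (tmap (hm s) (cm d s)); split.
- exact: tmap_lin.
- exact: (tmap_bij (hK s) (hinvK s) (cm_nz s hd)).
- exact: (tmap1 (h0 s) (cm0 d s)).
- by move=> p r; apply: (tmapM (hD s) (hc n4 d sD)).
- move=> i; rewrite tmapX hU cmU.
  rewrite (bigD1 ((s^-1)%g i)) //= big1 ?addr0.
    by rewrite mul_diag_mx !mxE permKV eqxx mulr1.
  move=> j ji; rewrite mul_diag_mx !mxE.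
  have -> : (s j == i) = false.
    by apply/negbTE; rewrite -(inj_eq (@perm_inj _ (s^-1)%g)) permK.
  by rewrite mulr0 scale0r.
Qed.

Unset Implicit Arguments.

Theorem proposition3p3 (k : fieldType) (n : nat) :
  (2%:R : k) != 0 -> (4 <= n)%N ->
  exists q : 'M[k]_n, quantum_param q /\
    mx_group_iso (qgr_aut q) (@monomial_D2n k n).
Proof.
move=> two n4; exists (qm k n); split; first exact: qparam.
exists id, id; split => //.
- by move=> g; apply: AB.
- by move=> h; apply: BA.
Qed.
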